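(* Let $C$ be a free $E$-linear code of length $2n$ and let $G$ be a generator matrix (over $\mathbb{F}_2$) of the binary code $SHull(C_{Res})=C_{Res}\cap (C_{Res})^{\perp_S}$. Then $\kappa G$ is a generator matrix of $SHull(C)$.
   Context: $E=\langle \kappa,\tau \mid 2\kappa=2\tau=0,\ \kappa^2=\kappa,\ \tau^2=\tau,\ \kappa\tau=\kappa,\ \tau\kappa=\tau\rangle$ is the non-unital ring $\{0,\kappa,\tau,\zeta\}$, $\zeta=\kappa+\tau$, with $e\kappa=e\tau=e$, $e\zeta=0$ for all $e\in E$. Every $e\in E$ is uniquely $u\kappa+v\zeta$ ($u,v\in\mathbb{F}_2$); $\pi(u\kappa+v\zeta)=u$, applied componentwise. For $v\in\mathbb{F}_2^m$, $e\in E$: $ev=(ev_1,\dots,ev_m)$ with $0\cdot e=0,1\cdot e=e$; for a binary matrix $G$, $\kappa G$ is the matrix obtained by multiplying each entry by $\kappa$ in this sense. An $E$-linear code of length $2n$ is a left $E$-submodule $C\subseteq E^{2n}$; $C_{Res}=\pi(C)$, $C_{Tor}=\{v\in\mathbb{F}_2^{2n}:\zeta v\in C\}$; $C$ is free if $C_{Res}=C_{Tor}$. Symplectic inner product: for $x=(u|v),y=(u'|v')$ (each half of length $n$, over $E$ or $\mathbb{F}_2$), $\langle x,y\rangle_s=\sum_i u_iv'_i+\sum_i v_iu'_i$. For binary $B$, $B^{\perp_S}=\{z:\langle z,w\rangle_s=0\ \forall w\in B\}$. For $E$-linear $C$: $C^{\perp_{S_L}}=\{z\in E^{2n}:\langle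 z,w\rangle_s=0\ \forall w\in C\}$, $C^{\perp_{S_R}}=\{z\in E^{2n}:\langle w,z\rangle_s=0\ \forall w\in C\}$, $C^{\perp_S}=C^{\perp_{S_L}}\cap C^{\perp_{S_R}}$, $SHull(C)=C\cap C^{\perp_S}$. For $X=\{x_1,\dots,x_k\}\subseteq E^{2n}$, $\langle X\rangle_E=\{\sum e_jx_j: e_j\in E\}$ and $\langle X\rangle_{\mathbb{F}_2}=\{\sum u_jx_j:u_j\in\mathbb{F}_2\}$; $X$ generates $C$ if $C=\langle X\rangle_E\cup\langle X\rangle_{\mathbb{F}_2}$, and a matrix whose rows form a generating set of $C$ is a generator matrix of $C$. *)

(* Defs.v *)
From HB Require Import structures.
From mathcomp Require Import all_boot all_algebra.
Set Implicit Arguments. Unset Strict Implicit. Unset Printing Implicit Defensive.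

(* The non-unital ring E = {0, kappa, tau, zeta}, zeta = kappa + tau. *)
Inductive E := E0 | Ek | Et | Ez.

Definition E2p (e : E) : bool * bool :=
  match e with E0 => (false, false) | Ek => (true, false)
             | Ez => (false, true) | Et => (true, true) end.
Definition p2E (p : bool * bool) : E :=
  match p with (false, false) => E0 | (true, false) => Ek
             | (false, true) => Ez | (true, true) => Et end.
Lemma E2pK : cancel E2p p2E. Proof. by case. Qed.
HB.instance Definition _ := Finite.copy E (can_type E2pK).

Definition eadd (a b : E) : E :=
  match a, b with
  | E0, x | x, E0 => x
  | Ek, Ek | Et, Et | Ez, Ez => E0
  | Ek, Et | Et, Ek => Ez
  | Ek, Ez | Ez, Ek => Et
  | Et, Ez | Ez, Et => Ek
  end.
Definition emul (a b : E) : E :=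
  match b with E0 | Ez => E0 | Ek | Et => a end.
(* pi (u kappa + v zeta) = u *)
Definition epi (e : E) : bool :=
  match e with E0 | Ez => false | Ek | Et => true end.
Definition bscale (b : bool) (e : E) : E := if b then e else E0.

(* vectors of length 2n; first half indexed by lshift, second by rshift *)
Notation vecE n := {ffun 'I_(n + n) -> E}.
Notation vecB n := {ffun 'I_(n + n) -> bool}.

Section Codes.
Variable n : nat.

Definition vzeroE : vecE n := [ffun => E0].
Definition vaddE (x y : vecE n) : vecE n := [ffun i => eadd (x i) (y i)].
Definition vmulE (e : E) (x : vecE n) : vecE n := [ffun i => emul e (x i)].

Definition E_linear (C : {set vecE n}) : Prop :=
  [/\ vzeroE \in C,
      (forall x y, x \in C -> y \in C -> vaddE x y \in C) &
      (forall e x, x \in C -> vmulE e x \in C)].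

Definition vpi (x : vecE n) : vecB n := [ffun i => epi (x i)].
Definition bvscale (e : E) (v : vecB n) : vecE n := [ffun i => bscale (v i) e].

Definition CRes (C : {set vecE n}) : {set vecB n} := [set vpi x | x in C].
Definition CTor (C : {set vecE n}) : {set vecB n} := [set v | bvscale Ez v \in C].
Definition free_code (C : {set vecE n}) : Prop := CRes C = CTor C.

Definition sympB (x y : vecB n) : bool :=
  (\big[addb/false]_(i < n) (x (lshift n i) && y (rshift n i)))
  (+) (\big[addb/false]_(i < n) (x (rshift n i) && y (lshift n i))).
Definition sympE (x y : vecE n) : E :=
  eadd (\big[eadd/E0]_(i < n) emul (x (lshift n i)) (y (rshift n i)))
       (\big[eadd/E0]_(i < n) emul (x (rshift n i)) (y (lshift n i))).

Definition perpSB (B : {set vecB n}) : {set vecB n} :=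
  [set z | [forall w in B, ~~ sympB z w]].
Definition SHullB (B : {set vecB n}) : {set vecB n} := B :&: perpSB B.

Definition perpSL (C : {set vecE n}) : {set vecE n} :=
  [set z | [forall w in C, sympE z w == E0]].
Definition perpSR (C : {set vecE n}) : {set vecE n} :=
  [set z | [forall w in C, sympE w z == E0]].
Definition perpS (C : {set vecE n}) : {set vecE n} := perpSL C :&: perpSR C.
Definition SHull (C : {set vecE n}) : {set vecE n} := C :&: perpS C.

Definition spanE k (M : 'M[E]_(k, n + n)) : {set vecE n} :=
  [set [ffun i => \big[eadd/E0]_(j < k) emul (c j) (M j i)] | c : {ffun 'I_k -> E}].
Definition spanF2E k (M : 'M[E]_(k, n + n)) : {set vecE n} :=
  [set [ffun i => \big[eadd/E0]_(j < k) bscale (u j) (M j i)] | u : {ffun 'I_k -> bool}].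
Definition spanB k (G : 'M[bool]_(k, n + n)) : {set vecB n} :=
  [set [ffun i => \big[addb/false]_(j < k) (u j && G j i)] | u : {ffun 'I_k -> bool}].

Definition genmatB k (G : 'M[bool]_(k, n + n)) (B : {set vecB n}) : Prop :=
  B = spanB G.
Definition genmatE k (M : 'M[E]_(k, n + n)) (C : {set vecE n}) : Prop :=
  C = spanE M :|: spanF2E M.

Definition kappaM k (G : 'M[bool]_(k, n + n)) : 'M[E]_(k, n + n) :=
  \matrix_(j, i) bscale (G j i) Ek.

End Codes.

(* Main.v *)
Require Import Defs.
From mathcomp Require Import all_boot all_algebra.

Definition ez (e : E) : bool := match e with Ez | Et => true | _ => false end.
Definition vz n (x : vecE n) : vecB n := [ffun i => ez (x i)].
Arguments vz {n}.

Lemma epi_add a b : epi (eadd a b) = epi a (+) epi b. Proof. by case: a; case: b. Qed.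
Lemma ez_add a b : ez (eadd a b) = ez a (+) ez b. Proof. by case: a; case: b. Qed.
Lemma epi_mul a b : epi (emul a b) = epi a && epi b. Proof. by case: a; case: b. Qed.
Lemma ez_mul a b : ez (emul a b) = ez a && epi b. Proof. by case: a; case: b. Qed.
Lemma epi_bscale g e : epi (bscale g e) = g && epi e. Proof. by case: g; case: e. Qed.
Lemma ez_bscale g e : ez (bscale g e) = g && ez e. Proof. by case: g; case: e. Qed.
Lemma emul_bscaleK c g : emul c (bscale g Ek) = bscale g c. Proof. by case: g. Qed.
Lemma eqE0 e : epi e = false -> ez e = false -> e = E0. Proof. by case: e. Qed.

Lemma epi_sum k (F : 'I_k -> E) :
  epi (\big[eadd/E0]_(j < k) F j) = \big[addb/false]_(j < k) epi (F j).
Proof. by elim/big_rec2: _ => //= j b e _ <-; rewrite epi_add. Qed.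
Lemma ez_sum k (F : 'I_k -> E) :
  ez (\big[eadd/E0]_(j < k) F j) = \big[addb/false]_(j < k) ez (F j).
Proof. by elim/big_rec2: _ => //= j b e _ <-; rewrite ez_add. Qed.

Lemma vecE_eq n (x y : vecE n) : vpi x = vpi y -> vz x = vz y -> x = y.
Proof.
move=> h1 h2; apply/ffunP=> i; move/ffunP: h1 => /(_ i); move/ffunP: h2 => /(_ i).
by rewrite !ffunE; case: (x i); case: (y i).
Qed.

Lemma epi_symp n (x y : vecE n) : epi (sympE x y) = sympB (vpi x) (vpi y).
Proof.
rewrite /sympE /sympB epi_add !epi_sum; congr addb; apply: eq_bigr => i _;
by rewrite epi_mul !ffunE.
Qed.
Lemma ez_symp n (x y : vecE n) : ez (sympE x y) = sympB (vz x) (vpi y).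
Proof.
rewrite /sympE /sympB ez_add !ez_sum; congr addb; apply: eq_bigr => i _;
by rewrite ez_mul !ffunE.
Qed.
Lemma sympBC n (x y : vecB n) : sympB x y = sympB y x.
Proof.
rewrite /sympB addbC; congr addb; apply: eq_bigr => i _; exact: andbC.
Qed.

Theorem mainTheorem2 (n : nat) (C : {set vecE n}) (k : nat) (G : 'M[bool]_(k, n + n)) :
  E_linear C -> free_code C ->
  genmatB G (SHullB (CRes C)) ->
  genmatE (kappaM G) (SHull C).
Proof.
move=> [C0 CD CM] Hfree HG.
have resP x : x \in C -> vpi x \in CRes C by move=> h; exact: imset_f.
have zP x : x \in C -> vz x \in CRes C.
  move=> xC; rewrite Hfree inE; have := CD _ _ xC (CM Ek _ xC).
  congr (_ \in C); apply/ffunP=> i; rewrite /vaddE /vmulE /bvscale /vz !ffunE.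
  by case: (x i).
have mkP x : vpi x \in CRes C -> vz x \in CRes C -> x \in C.
  move=> /imsetP [y yC hy] hb; rewrite Hfree inE in hb.
  have := CD _ _ (CM Ek _ yC) hb; congr (_ \in C); apply/ffunP => i.
  move/ffunP: hy => /(_ i); rewrite /vaddE /vmulE /bvscale /vpi /vz !ffunE.
  by case: (x i); case: (y i).
have shullP z : (z \in SHull C) =
    (vpi z \in SHullB (CRes C)) && (vz z \in SHullB (CRes C)).
  apply/idP/idP.
    rewrite /SHull /perpS inE => /andP [zC]; rewrite !inE => /andP [/forallP hL /forallP hR].
    rewrite resP // zP //=.
    apply/andP; split; apply/forallP => w; apply/implyP => /imsetP [y yC ->];
      move: (hL y); rewrite yC /= => /eqP h.
      by rewrite -epi_symp h.
    by rewrite -ez_symp h.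
  move=> /andP []; rewrite /SHull /perpS; rewrite /SHullB !inE => /andP [ra /forallP pa] /andP [rb /forallP pb].
  rewrite mkP //=; apply/andP; split; apply/forallP => w; apply/implyP => wC;
    apply/eqP; apply: eqE0.
  - rewrite epi_symp; by move: (pa (vpi w)); rewrite resP //= => /negbTE.
  - rewrite ez_symp; by move: (pb (vpi w)); rewrite resP //= => /negbTE.
  - rewrite epi_symp sympBC; by move: (pa (vpi w)); rewrite resP //= => /negbTE.
  - rewrite ez_symp sympBC; by move: (pa (vz w)); rewrite zP //= => /negbTE.
have spanP x : (x \in spanE (kappaM G) :|: spanF2E (kappaM G)) =
    (vpi x \in spanB G) && (vz x \in spanB G).
  apply/idP/idP.
    rewrite inE => /orP [/imsetP [c _ ->] | /imsetP [u _ ->]].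
      apply/andP; split; apply/imsetP;
        [exists [ffun j => epi (c j)] | exists [ffun j => ez (c j)]] => //;
        apply/ffunP => i; rewrite !ffunE ?epi_sum ?ez_sum; apply: eq_bigr => j _;
        by rewrite !ffunE mxE emul_bscaleK ?epi_bscale ?ez_bscale andbC.
    apply/andP; split; apply/imsetP;
      [exists u | exists [ffun => false]] => //;
      apply/ffunP => i; rewrite !ffunE ?epi_sum ?ez_sum; apply: eq_bigr => j _;
      rewrite ?ffunE mxE ?epi_bscale ?ez_bscale //=;
      by case: (u j); case: (G j i).
  move=> /andP [/imsetP [u _ hu] /imsetP [v _ hv]].
  rewrite inE; apply/orP; left; apply/imsetP; exists [ffun j => p2E (u j, v j)] => //.
  apply: vecE_eq; apply/ffunP => i.
    move/ffunP: hu => /(_ i); rewrite !ffunE => ->; rewrite epi_sum.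
    apply: eq_bigr => j _; rewrite !ffunE mxE emul_bscaleK epi_bscale.
    by case: (u j); case: (v j); rewrite ?andbT ?andbF.
  move/ffunP: hv => /(_ i); rewrite !ffunE => ->; rewrite ez_sum.
  apply: eq_bigr => j _; rewrite !ffunE mxE emul_bscaleK ez_bscale.
  by case: (u j); case: (v j); rewrite ?andbT ?andbF.
rewrite /genmatE; apply/setP => x; by rewrite shullP spanP HG.
Qed.
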